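(* Let $I$ be an index set and $p_r,q_r\in\mathbb R\setminus\{0\}$ for $r\in I$. There exists a homeomorphism $f\colon\mathbb R\to\mathbb R$ with $f(p_rx)=q_rf(x)$ for all $x\in\mathbb R$, $r\in I$, if and only if there exists a real number $\alpha>-1$ such that $q_r=p_r|p_r|^{\alpha}$ for all $r\in I$. *)

(* Defs.v *)
From Stdlib Require Import Reals.
Open Scope R_scope.

Definition homeomorphism (f : R -> R) : Prop :=
  continuity f /\
  exists g : R -> R, continuity g /\
    (forall x, g (f x) = x) /\ (forall y, f (g y) = y).

(* Main.v *)
Require Import Defs.
From Stdlib Require Import Reals Lra Lia Psatz ZArith Classical.
Open Scope R_scope.

Lemma floor_nat (t : R) : 0 <= t -> exists m : nat, INR m <= t < INR m + 1.
Proof.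
  intros Ht. destruct (base_Int_part t) as [H1 H2].
  assert (Hz : (0 <= Int_part t)%Z).
  { assert (IZR (Int_part t) > -1) by lra.
    assert (-1 < Int_part t)%Z by (apply lt_IZR; simpl; lra). lia. }
  exists (Z.to_nat (Int_part t)).
  rewrite INR_IZR_INZ, Z2Nat.id by exact Hz. lra.
Qed.

Lemma lemL (u1 u2 v1 v2 : R) : 0 < u1 -> 0 < u2 -> 0 < v1 ->
  (forall m n : nat, INR m * u1 <= INR n * u2 -> INR m * v1 <= INR n * v2) ->
  u2 * v1 <= v2 * u1.
Proof.
  intros h1 h2 h3 H.
  destruct (Rle_dec (u2 * v1) (v2 * u1)) as [|Hn]; [assumption|exfalso].
  set (d := u2 * v1 - v2 * u1).
  assert (Hd : 0 < d) by (unfold d; lra).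
  destruct (INR_unbounded (u1 * v1 / d)) as [n Hn1].
  assert (Ht : 0 <= INR n * u2 / u1).
  { apply Rmult_le_pos; [apply Rmult_le_pos; [apply pos_INR|lra]|].
    left; apply Rinv_0_lt_compat; lra. }
  destruct (floor_nat _ Ht) as [m [Hm1 Hm2]].
  assert (E1 : INR m * u1 <= INR n * u2).
  { apply Rmult_le_compat_r with (r := u1) in Hm1; [|lra].
    replace (INR n * u2 / u1 * u1) with (INR n * u2) in Hm1 by (field; lra). lra. }
  assert (E2 : INR n * u2 < INR m * u1 + u1).
  { apply Rmult_lt_compat_r with (r := u1) in Hm2; [|lra].
    replace (INR n * u2 / u1 * u1) with (INR n * u2) in Hm2 by (field; lra). lra. }
  specialize (H m n E1).
  assert (E3 : INR n * d > u1 * v1).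
  { apply Rmult_lt_compat_r with (r := d) in Hn1; [|lra].
    replace (u1 * v1 / d * d) with (u1 * v1) in Hn1 by (field; lra). lra. }
  unfold d in E3.
  assert (INR n * u2 * v1 < (INR m * u1 + u1) * v1) by (apply Rmult_lt_compat_r; lra).
  assert (INR m * v1 * u1 <= INR n * v2 * u1) by (apply Rmult_le_compat_r; lra).
  nra.
Qed.

Section Mono.
Variable F : R -> R.
Hypothesis Fmono : forall x y, 0 < x -> x < y -> F x < F y.
Hypothesis F1 : 0 < F 1.

Definition Hyp (u v : R) := forall x, 0 < x -> F (exp u * x) = exp v * F x.

Lemma Fle x y : 0 < x -> x <= y -> F x <= F y.
Proof. intros h [h'|h']. left; apply Fmono; auto. subst; lra. Qed.

Lemma pow_hyp u v : Hyp u v -> forall m : nat, F (exp (INR m * u)) = exp (INR m * v) * F 1.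
Proof.
  intros H m. induction m as [|m IH].
  - simpl. rewrite !Rmult_0_l, exp_0. ring.
  - rewrite S_INR. replace ((INR m + 1) * u) with (u + INR m * u) by ring.
    replace ((INR m + 1) * v) with (v + INR m * v) by ring.
    rewrite !exp_plus, H by apply exp_pos. rewrite IH. ring.
Qed.

Lemma vpos u v : 0 < u -> Hyp u v -> 0 < v.
Proof.
  intros hu H. pose proof (H 1 Rlt_0_1) as E. rewrite Rmult_1_r in E.
  assert (F 1 < F (exp u)) by (apply Fmono; [lra|]; rewrite <- exp_0; apply exp_increasing; lra).
  assert (1 < exp v) by nra. rewrite <- exp_0 in H1. apply exp_lt_inv in H1. lra.
Qed.

Lemma key_pos u1 v1 u2 v2 : 0 < u1 -> 0 < u2 -> Hyp u1 v1 -> Hyp u2 v2 -> v1 * u2 = v2 * u1.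
Proof.
  intros h1 h2 H1 H2.
  assert (g1 := vpos _ _ h1 H1). assert (g2 := vpos _ _ h2 H2).
  assert (C : forall a b c d, Hyp a b -> Hyp c d -> forall m n : nat,
     INR m * a <= INR n * c -> INR m * b <= INR n * d).
  { intros a b c d Ha Hc m n Hmn.
    assert (exp (INR m * a) <= exp (INR n * c)).
    { destruct Hmn as [l|e]; [left; apply exp_increasing; auto | rewrite e; lra]. }
    assert (F (exp (INR m * a)) <= F (exp (INR n * c))) by (apply Fle; auto; apply exp_pos).
    rewrite (pow_hyp _ _ Ha), (pow_hyp _ _ Hc) in H0.
    destruct (Rle_dec (INR m * b) (INR n * d)) as [|Hn]; auto. exfalso.
    assert (exp (INR n * d) < exp (INR m * b)) by (apply exp_increasing; lra).
    nra. }
  pose proof (lemL _ _ _ _ h1 h2 g1 (C _ _ _ _ H1 H2)).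
  pose proof (lemL _ _ _ _ h2 h1 g2 (C _ _ _ _ H2 H1)).
  lra.
Qed.

Lemma flip u v : Hyp u v -> Hyp (-u) (-v).
Proof.
  intros H x hx.
  assert (E := H (exp (-u) * x) ltac:(apply Rmult_lt_0_compat; [apply exp_pos|lra])).
  rewrite <- Rmult_assoc, <- exp_plus in E. replace (u + - u) with 0 in E by ring.
  rewrite exp_0, Rmult_1_l in E. rewrite E, <- Rmult_assoc, <- exp_plus.
  replace (-v + v) with 0 by ring. rewrite exp_0. ring.
Qed.

Lemma key_gen u1 v1 u2 v2 : u1 <> 0 -> u2 <> 0 -> Hyp u1 v1 -> Hyp u2 v2 -> v1 * u2 = v2 * u1.
Proof.
  intros h1 h2 H1 H2.
  destruct (Rdichotomy _ _ h1) as [H|H]; destruct (Rdichotomy _ _ h2) as [H0|H0].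
  - pose proof (key_pos (-u1) (-v1) (-u2) (-v2) ltac:(lra) ltac:(lra) (flip _ _ H1) (flip _ _ H2)). nra.
  - pose proof (key_pos (-u1) (-v1) u2 v2 ltac:(lra) H0 (flip _ _ H1) H2). nra.
  - pose proof (key_pos u1 v1 (-u2) (-v2) H ltac:(lra) H1 (flip _ _ H2)). nra.
  - apply key_pos; auto.
Qed.

Lemma sign_gen u v : u <> 0 -> Hyp u v -> 0 < u * v.
Proof.
  intros h H. destruct (Rdichotomy _ _ h) as [H0|H0].
  - pose proof (vpos (-u) (-v) ltac:(lra) (flip _ _ H)). nra.
  - pose proof (vpos _ _ H0 H). nra.
Qed.
End Mono.

Section Peak.
Variable f : R -> R.
Hypothesis Hc : continuity f.
Hypothesis Hi : forall x y, f x = f y -> x = y.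

Lemma cont_shift k : continuity (fun t => f t - k).
Proof.
  intro x. apply (continuity_pt_minus f (fun _ => k)); [apply Hc|].
  apply continuity_pt_const. intros a b; reflexivity.
Qed.

Lemma hit a b k : a <= b -> (f a - k) * (f b - k) <= 0 -> exists z, a <= z <= b /\ f z = k.
Proof.
  intros hab hp. destruct (IVT_cor (fun t => f t - k) a b (cont_shift k) hab hp) as [z [hz e]].
  exists z. split; auto. lra.
Qed.

Lemma no_peak a b c : a < b -> b < c -> f a < f b -> f c < f b -> False.
Proof.
  intros h1 h2 h3 h4. destruct (Rle_dec (f a) (f c)).
  - destruct (hit a b (f c)) as [z [hz e]]; [lra| nra |].
    apply Hi in e. lra.
  - destruct (hit b c (f a)) as [z [hz e]]; [lra| nra |].
    apply Hi in e. lra.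
Qed.

Lemma no_valley a b c : a < b -> b < c -> f b < f a -> f b < f c -> False.
Proof.
  intros h1 h2 h3 h4. destruct (Rle_dec (f a) (f c)).
  - destruct (hit b c (f a)) as [z [hz e]]; [lra| nra |].
    apply Hi in e. lra.
  - destruct (hit a b (f c)) as [z [hz e]]; [lra| nra |].
    apply Hi in e. lra.
Qed.

Hypothesis H0 : f 0 = 0.

Lemma fnz x : x <> 0 -> f x <> 0.
Proof. intros h e. rewrite <- H0 in e. apply Hi in e. auto. Qed.

Lemma pos_mono x y : 0 < x -> x < y -> Rabs (f x) < Rabs (f y).
Proof.
  intros h1 h2. assert (fx := fnz x ltac:(intro; lra)). assert (fy := fnz y ltac:(intro; lra)).
  assert (fxy : f x <> f y) by (intro e; apply Hi in e; lra).
  destruct (Rdichotomy _ _ fx).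
  - destruct (Rlt_or_le (f y) (f x)).
    + rewrite !Rabs_left; lra.
    + exfalso. apply (no_valley 0 x y); lra.
  - destruct (Rlt_or_le (f x) (f y)).
    + rewrite !Rabs_right; lra.
    + exfalso. apply (no_peak 0 x y); lra.
Qed.

Lemma same_sign x y : 0 < x -> 0 < y -> 0 < f x * f y.
Proof.
  intros h1 h2. assert (fx := fnz x ltac:(intro; lra)). assert (fy := fnz y ltac:(intro; lra)).
  destruct (Rtotal_order x y) as [l|[e|l]].
  - destruct (Rdichotomy _ _ fx); destruct (Rdichotomy _ _ fy); try nra; exfalso.
    + apply (no_valley 0 x y); lra.
    + apply (no_peak 0 x y); lra.
  - subst. destruct (Rdichotomy _ _ fx); nra.
  - destruct (Rdichotomy _ _ fx); destruct (Rdichotomy _ _ fy); try nra; exfalso.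
    + apply (no_peak 0 y x); lra.
    + apply (no_valley 0 y x); lra.
Qed.

Lemma opp_sign x y : x < 0 -> 0 < y -> f x * f y < 0.
Proof.
  intros h1 h2. assert (fx := fnz x ltac:(intro; lra)). assert (fy := fnz y ltac:(intro; lra)).
  destruct (Rdichotomy _ _ fx); destruct (Rdichotomy _ _ fy); try nra; exfalso.
  + apply (no_peak x 0 y); lra.
  + apply (no_valley x 0 y); lra.
Qed.
End Peak.

Definition pw (b x : R) : R :=
  if Rlt_dec 0 x then Rpower x b else if Rlt_dec x 0 then - Rpower (- x) b else 0.

Lemma pw_pos b x : 0 < x -> pw b x = Rpower x b.
Proof. intro h; unfold pw; destruct (Rlt_dec 0 x); [reflexivity|lra]. Qed.
Lemma pw_neg b x : x < 0 -> pw b x = - Rpower (- x) b.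
Proof. intro h; unfold pw; destruct (Rlt_dec 0 x); [lra|]; destruct (Rlt_dec x 0); [reflexivity|lra]. Qed.
Lemma pw_0 b : pw b 0 = 0.
Proof. unfold pw; destruct (Rlt_dec 0 0); [lra|]; destruct (Rlt_dec 0 0); [lra|reflexivity]. Qed.

Lemma Rpower_pos x b : 0 < Rpower x b.
Proof. apply exp_pos. Qed.

Lemma pw_mult b x y : pw b (x * y) = pw b x * pw b y.
Proof.
  destruct (Rtotal_order x 0) as [hx|[hx|hx]]; destruct (Rtotal_order y 0) as [hy|[hy|hy]];
  try (subst; rewrite ?Rmult_0_l, ?Rmult_0_r, pw_0; ring).
  - rewrite pw_pos by nra. rewrite !pw_neg by lra.
    replace (x*y) with ((-x)*(-y)) by ring. rewrite <- Rpower_mult_distr by lra. ring.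
  - rewrite pw_neg by nra. rewrite pw_neg, pw_pos by lra.
    replace (-(x*y)) with ((-x)*y) by ring. rewrite <- Rpower_mult_distr by lra. ring.
  - rewrite pw_neg by nra. rewrite pw_pos, pw_neg by lra.
    replace (-(x*y)) with (x*(-y)) by ring. rewrite <- Rpower_mult_distr by lra. ring.
  - rewrite !pw_pos by nra. rewrite <- Rpower_mult_distr by lra. reflexivity.
Qed.

Lemma pw_inv b c x : b * c = 1 -> pw c (pw b x) = x.
Proof.
  intro hbc. destruct (Rtotal_order x 0) as [hx|[hx|hx]].
  - rewrite (pw_neg b) by lra. rewrite pw_neg by (pose proof (Rpower_pos (-x) b); lra).
    rewrite Ropp_involutive, Rpower_mult, hbc, Rpower_1 by lra. ring.
  - subst. rewrite !pw_0. reflexivity.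
  - rewrite (pw_pos b) by lra. rewrite pw_pos by apply Rpower_pos.
    rewrite Rpower_mult, hbc, Rpower_1 by lra. reflexivity.
Qed.

Lemma cont_local f g x d : 0 < d -> (forall y, Rabs (y - x) < d -> f y = g y) ->
  continuity_pt g x -> continuity_pt f x.
Proof.
  intros hd Hfg Hg. unfold continuity_pt, continue_in, limit1_in, limit_in in *.
  intros eps heps. destruct (Hg eps heps) as [a [ha H]].
  exists (Rmin a d). split; [apply Rmin_pos; auto|].
  intros y [Hy1 Hy2]. simpl in *. unfold R_dist in *.
  rewrite (Hfg y), (Hfg x).
  - apply H. split; auto. apply Rlt_le_trans with (Rmin a d); auto. apply Rmin_l.
  - rewrite Rminus_diag, Rabs_R0. auto.
  - apply Rlt_le_trans with (Rmin a d); auto. apply Rmin_r.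
Qed.

Lemma cont_Rpower b x : 0 < x -> continuity_pt (fun y => Rpower y b) x.
Proof.
  intro hx. apply derivable_continuous_pt.
  exists (b * Rpower x (b - 1)). apply derivable_pt_lim_power. auto.
Qed.

Lemma pw_cont b : 0 < b -> continuity (pw b).
Proof.
  intros hb x. destruct (Rtotal_order x 0) as [hx|[hx|hx]].
  - apply (cont_local _ (fun y => - Rpower (- y) b) x (-x)); [lra| |].
    + intros y hy. apply pw_neg. apply Rabs_def2 in hy. lra.
    + apply (continuity_pt_opp (fun y => Rpower (- y) b)).
      apply (continuity_pt_comp (fun y => - y) (fun z => Rpower z b)).
      * apply continuity_pt_opp. apply derivable_continuous_pt, derivable_pt_id.
      * apply cont_Rpower. lra.
  - subst. unfold continuity_pt, continue_in, limit1_in, limit_in.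
    intros eps heps. exists (Rpower eps (/ b)). split; [apply Rpower_pos|].
    intros y [[_ hy0] hy]. simpl in *. unfold R_dist in *.
    rewrite Rminus_0_r in hy. rewrite pw_0, Rminus_0_r.
    assert (E : Rpower (Rpower eps (/ b)) b = eps).
    { rewrite Rpower_mult, Rinv_l, Rpower_1 by lra. reflexivity. }
    destruct (Rdichotomy _ _ (not_eq_sym hy0)) as [hy1|hy1].
    + rewrite pw_neg by lra. rewrite Rabs_left by (pose proof (Rpower_pos (-y) b); lra).
      rewrite Ropp_involutive, <- E. apply Rlt_Rpower_l; auto.
      rewrite Rabs_left in hy by lra. lra.
    + rewrite pw_pos by lra. rewrite Rabs_right by (pose proof (Rpower_pos y b); lra).
      rewrite <- E. apply Rlt_Rpower_l; auto.
      rewrite Rabs_right in hy by lra. lra.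
  - apply (cont_local _ (fun y => Rpower y b) x x); [lra| |].
    + intros y hy. apply pw_pos. apply Rabs_def2 in hy. lra.
    + apply cont_Rpower. lra.
Qed.

Theorem theorem9p1 (I : Type) (p q : I -> R)
  (hp : forall r, p r <> 0) (hq : forall r, q r <> 0) :
  (exists f : R -> R, homeomorphism f /\
     forall (x : R) (r : I), f (p r * x) = q r * f x)
  <->
  (exists alpha : R, alpha > -1 /\
     forall r : I, q r = p r * Rpower (Rabs (p r)) alpha).
Proof.
split.
- intros [f [[Hc [g [_ [Hgf Hfg]]]] Hfe]].
  assert (Hi : forall x y, f x = f y -> x = y).
  { intros x y e. rewrite <- (Hgf x), <- (Hgf y), e. reflexivity. }
  assert (ones : forall r, Rabs (p r) = 1 -> q r = p r).
  { intros r hr. set (x0 := g 1). assert (fx0 : f x0 = 1) by apply Hfg.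
    assert (hp1 : p r = 1 \/ p r = -1).
    { destruct (Rcase_abs (p r)); [rewrite Rabs_left in hr by lra | rewrite Rabs_right in hr by lra]; lra. }
    destruct hp1 as [e|e].
    - pose proof (Hfe x0 r) as E. rewrite e, Rmult_1_l, fx0 in E. lra.
    - pose proof (Hfe x0 r) as E1. pose proof (Hfe (p r * x0) r) as E2.
      rewrite E1 in E2. rewrite e in E2. replace (-1 * (-1 * x0)) with x0 in E2 by ring. rewrite fx0 in E2.
      assert (Hq : q r = 1 \/ q r = -1).
      { assert ((q r - 1) * (q r + 1) = 0) by nra. apply Rmult_integral in H. lra. }
      destruct Hq as [Hq|Hq]; [|lra].
      exfalso. pose proof (Hfe 1 r) as E3. rewrite e, Hq, Rmult_1_l in E3. apply Hi in E3. lra. }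
  destruct (classic (exists r0, Rabs (p r0) <> 1)) as [[r0 hr0]|Hno].
  2: { exists 0. split; [lra|]. intro r.
       assert (H : Rabs (p r) = 1) by (apply NNPP; intro; apply Hno; eauto).
       rewrite (ones r H), H. unfold Rpower. rewrite ln_1, Rmult_0_r, exp_0. ring. }
  assert (H0 : f 0 = 0).
  { pose proof (Hfe 0 r0) as E. rewrite Rmult_0_r in E.
    destruct (Req_dec (f 0) 0) as [|hn]; auto. exfalso.
    assert (H : q r0 = 1). { apply (Rmult_eq_reg_r (f 0)); auto. lra. }
    pose proof (Hfe 1 r0) as E1. rewrite H, Rmult_1_l, Rmult_1_r in E1. apply Hi in E1.
    apply hr0. rewrite E1. apply Rabs_R1. }
  set (F := fun x => Rabs (f x)).
  assert (Fmono : forall x y, 0 < x -> x < y -> F x < F y) by (intros; apply pos_mono; auto).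
  assert (F1 : 0 < F 1) by (apply Rabs_pos_lt, (fnz f Hi H0); lra).
  assert (expu : forall z, z <> 0 -> exp (2 * ln (Rabs z)) = z * z).
  { intros z hz. replace (2 * ln (Rabs z)) with (ln (Rabs z) + ln (Rabs z)) by ring.
    rewrite exp_plus, exp_ln by (apply Rabs_pos_lt; auto). rewrite <- Rabs_mult. apply Rabs_right. nra. }
  assert (hyp : forall r, Hyp F (2 * ln (Rabs (p r))) (2 * ln (Rabs (q r)))).
  { intros r x hx. unfold F. rewrite !expu by auto.
    replace (p r * p r * x) with (p r * (p r * x)) by ring.
    rewrite Hfe, Hfe, <- Rmult_assoc, Rabs_mult, (Rabs_right (q r * q r)) by nra. reflexivity. }
  assert (uz : forall r, Rabs (p r) <> 1 -> 2 * ln (Rabs (p r)) <> 0).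
  { intros r h. pose proof (ln_neq_0 _ h (Rabs_pos_lt _ (hp r))). lra. }
  set (u0 := ln (Rabs (p r0))). set (v0 := ln (Rabs (q r0))).
  set (c := v0 / u0).
  assert (u0nz : u0 <> 0) by (pose proof (uz r0 hr0); unfold u0; lra).
  assert (cpos : 0 < c).
  { pose proof (sign_gen F Fmono F1 _ _ (uz r0 hr0) (hyp r0)) as S.
    fold u0 v0 in S.
    assert (E : c * (u0 * u0) = v0 * u0) by (unfold c; field; auto).
    assert (0 < u0 * u0) by (destruct (Rdichotomy _ _ u0nz); nra). nra. }
  exists (c - 1). split; [lra|]. intro r.
  destruct (Req_dec (Rabs (p r)) 1) as [e|ne].
  { rewrite (ones r e), e. unfold Rpower. rewrite ln_1, Rmult_0_r, exp_0. ring. }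
  pose proof (key_gen F Fmono F1 _ _ _ _ (uz r ne) (uz r0 hr0) (hyp r) (hyp r0)) as K.
  fold u0 v0 in K.
  assert (hc : c * u0 = v0) by (unfold c; field; auto).
  assert (hv : ln (Rabs (q r)) = c * ln (Rabs (p r))).
  { apply (Rmult_eq_reg_r u0); auto.
    rewrite Rmult_assoc, (Rmult_comm (ln (Rabs (p r)))), <- Rmult_assoc, hc. lra. }
  assert (f1sq : 0 < f 1 * f 1).
  { pose proof (fnz f Hi H0 1 ltac:(lra)). destruct (Rdichotomy _ _ H); nra. }
  pose proof (Hfe 1 r) as E. rewrite Rmult_1_r in E.
  unfold Rpower.
  replace ((c - 1) * ln (Rabs (p r))) with (ln (Rabs (q r)) + - ln (Rabs (p r))) by lra.
  rewrite exp_plus, exp_Ropp, !exp_ln by (apply Rabs_pos_lt; auto).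
  destruct (Rdichotomy _ _ (hp r)) as [h|h].
  + pose proof (opp_sign f Hc Hi H0 (p r) 1 h ltac:(lra)) as S. rewrite E in S.
    assert (q r < 0) by nra.
    rewrite Rabs_left, (Rabs_left (p r)) by auto. field. auto.
  + pose proof (same_sign f Hc Hi H0 (p r) 1 h ltac:(lra)) as S. rewrite E in S.
    assert (0 < q r) by nra.
    rewrite Rabs_right, (Rabs_right (p r)) by lra. field. auto.
- intros [a [ha Hq]]. set (b := a + 1).
  exists (pw b). split.
  + split. { apply pw_cont; unfold b; lra. }
    exists (pw (/b)). split; [apply pw_cont; apply Rinv_0_lt_compat; unfold b; lra|].
    split; intro; apply pw_inv; field; unfold b; lra.
  + intros x r. rewrite pw_mult. f_equal. rewrite Hq.
    destruct (Rdichotomy _ _ (hp r)) as [h|h].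
    * rewrite pw_neg by auto. rewrite Rabs_left by auto. unfold b.
      rewrite Rpower_plus, Rpower_1 by lra. ring.
    * rewrite pw_pos by auto. rewrite Rabs_right by lra. unfold b.
      rewrite Rpower_plus, Rpower_1 by lra. ring.
Qed.
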